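(* Assume Hypotheses 1, 2 and 3 (see context). For any $x\in\Gamma$ and any $\mathbf{x}\in\mathcal{C}(\mathbf{0})$, $$\|\Pi(Q(t,x)\mathbf{x})\|\ge\|\Pi(\mathbf{x})\|\exp\Big(\int_0^t\big(\alpha(\Phi(s,x))-\|D_zf(\Phi(s,x))\|\big)\,ds\Big)\quad\text{for all }t\ge0.$$
   Context: System $\dot x=F(x)$ with $F=(f,g)$, i.e. $\dot a=f(a,z)$, $\dot z=g(a,z)$, $(a,z)\in\mathbb{R}^n\times\mathbb{R}^m$, $X=\mathbb{R}^n\times\mathbb{R}^m$, flow $\Phi(t,x)$. Euclidean inner product, norm, operator norm. $\mathcal{L}(x_1,x_2)=\|a_2-a_1\|^2-\|z_2-z_1\|^2$, $\mathcal{C}(x)=\{x'\in X:\mathcal{L}(x',x)\ge0\}$, $\mathbf{0}$ the zero vector of $X$; $\Pi(a,z)=a$, $\Pi_\perp(a,z)=z$; $\mathbb{B}_d(x)=\{(a',z'):\|a'-a\|\le d,\|z'-z\|\le d\}$. $\Gamma\subseteq U$ positively invariant means $\Phi(t,x)$ is defined for all $t\ge0$ for $x\in\Gamma$ and $\Phi(t,\Gamma)\subseteq\Gamma$. Hypothesis 1: $U$ open and convex, and there is $d>0$ with $\mathcal{C}(x)\cap U\subset\mathbb{B}_d(x)$ for all $x\in U$. Hypothesis 2: $f,g$ are $C^1$ on $U$; there exist continuous $\alpha>0$, $\ell\ge0$ on $U$ and $c_1>0$ with, for all $x\in U$: $\langle a',D_af(x)a'\rangle\ge\alpha(x)\|a'\|^2$;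 $\langle z',D_zg(x)z'\rangle\le\ell(x)\|z'\|^2$; $\alpha(x)\ge\ell(x)+\|D_zf(x)\|+\|D_ag(x)\|+c_1$. Hypothesis 3: $\Gamma\subset U$ is positively invariant and $\Pi_\perp(\Gamma)=\Pi_\perp(U)$. For $x\in\Gamma$, $Q(t,x)$ ($t\ge0$) denotes the fundamental matrix solution of the variational equation $\dot{\mathbf{x}}=DF(\Phi(t,x))\mathbf{x}$ with $Q(0,x)=I$. *)

(* Defs.v *)
From Stdlib Require Import Reals ClassicalEpsilon.
From Stdlib Require Vectors.Fin.
Open Scope R_scope.

Definition vec (k : nat) := Fin.t k -> R.

Fixpoint fsum (k : nat) : (Fin.t k -> R) -> R :=
  match k return (Fin.t k -> R) -> R with
  | O => fun _ => 0
  | S k' => fun u => u Fin.F1 + fsum k' (fun i => u (Fin.FS i))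
  end.

Definition dot {k} (u v : vec k) : R := fsum k (fun i => u i * v i).
Definition norm {k} (u : vec k) : R := sqrt (dot u u).
Definition vadd {k} (u v : vec k) : vec k := fun i => u i + v i.
Definition vsub {k} (u v : vec k) : vec k := fun i => u i - v i.
Definition vscal {k} (c : R) (u : vec k) : vec k := fun i => c * u i.
Definition vzero {k} : vec k := fun _ => 0.

Definition mat (p q : nat) := Fin.t p -> Fin.t q -> R.
Definition mvmul {p q} (A : mat p q) (v : vec q) : vec p :=
  fun i => fsum q (fun j => A i j * v j).

Definition opnorm {p q} (A : mat p q) : R :=
  epsilon (inhabits 0)
    (fun c => is_lub (fun r => exists v : vec q, norm v <= 1 /\ r = norm (mvmul A v)) c).

Definition pt (n m : nat) := (vec n * vec m)%type.
Definition Pi {n m} (x : pt n m) : vec n := fst x.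
Definition Piperp {n m} (x : pt n m) : vec m := snd x.
Definition ptzero {n m} : pt n m := (vzero, vzero).
Definition ptadd {n m} (x y : pt n m) : pt n m := (vadd (fst x) (fst y), vadd (snd x) (snd y)).
Definition ptsub {n m} (x y : pt n m) : pt n m := (vsub (fst x) (fst y), vsub (snd x) (snd y)).
Definition ptscal {n m} (c : R) (x : pt n m) : pt n m := (vscal c (fst x), vscal c (snd x)).
Definition ptnorm {n m} (x : pt n m) : R := sqrt (dot (fst x) (fst x) + dot (snd x) (snd x)).

Definition Lf {n m} (x1 x2 : pt n m) : R :=
  (norm (vsub (fst x2) (fst x1)))^2 - (norm (vsub (snd x2) (snd x1)))^2.
Definition Cone {n m} (x : pt n m) (x' : pt n m) : Prop := Lf x' x >= 0.
Definition Ball {n m} (d : R) (x : pt n m) (x' : pt n m) : Prop :=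
  norm (vsub (fst x') (fst x)) <= d /\ norm (vsub (snd x') (snd x)) <= d.

Definition X_open {n m} (U : pt n m -> Prop) : Prop :=
  forall x, U x -> exists r, 0 < r /\ forall y, ptnorm (ptsub y x) < r -> U y.
Definition X_convex {n m} (U : pt n m -> Prop) : Prop :=
  forall x y (l : R), 0 <= l <= 1 -> U x -> U y ->
    U (ptadd (ptscal l x) (ptscal (1 - l) y)).

Definition cont_on {n m} (U : pt n m -> Prop) (phi : pt n m -> R) : Prop :=
  forall x, U x -> forall eps, 0 < eps ->
    exists del, 0 < del /\ forall y, U y -> ptnorm (ptsub y x) < del ->
      Rabs (phi y - phi x) < eps.

Definition Fld {n m} (f : pt n m -> vec n) (g : pt n m -> vec m) (x : pt n m) : pt n m :=
  (f x, g x).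
Definition DF {n m} (Daf : pt n m -> mat n n) (Dzf : pt n m -> mat n m)
  (Dag : pt n m -> mat m n) (Dzg : pt n m -> mat m m) (x : pt n m) (h : pt n m) : pt n m :=
  (vadd (mvmul (Daf x) (fst h)) (mvmul (Dzf x) (snd h)),
   vadd (mvmul (Dag x) (fst h)) (mvmul (Dzg x) (snd h))).

Definition frechet_at {n m} (f : pt n m -> vec n) (g : pt n m -> vec m)
  Daf Dzf Dag Dzg (x : pt n m) : Prop :=
  forall eps, 0 < eps -> exists del, 0 < del /\ forall h : pt n m, ptnorm h < del ->
    ptnorm (ptsub (ptsub (Fld f g (ptadd x h)) (Fld f g x)) (DF Daf Dzf Dag Dzg x h))
      <= eps * ptnorm h.

Definition C1_on {n m} (U : pt n m -> Prop) (f : pt n m -> vec n) (g : pt n m -> vec m)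
  (Daf : pt n m -> mat n n) (Dzf : pt n m -> mat n m)
  (Dag : pt n m -> mat m n) (Dzg : pt n m -> mat m m) : Prop :=
  (forall x, U x -> frechet_at f g Daf Dzf Dag Dzg x) /\
  (forall i j, cont_on U (fun x => Daf x i j)) /\
  (forall i j, cont_on U (fun x => Dzf x i j)) /\
  (forall i j, cont_on U (fun x => Dag x i j)) /\
  (forall i j, cont_on U (fun x => Dzg x i j)).

(* y : [0,oo) -> X solves y'(t) = V(t, y(t)) for t >= 0: continuous on [0,oo)
   and differentiable with the prescribed derivative for t > 0 (componentwise). *)
Definition solves_pos {n m} (y : R -> pt n m) (V : R -> pt n m -> pt n m) : Prop :=
  (forall (i : Fin.t n) t, 0 <= t -> forall eps, 0 < eps -> exists del, 0 < del /\
     forall s, 0 <= s -> Rabs (s - t) < del -> Rabs (fst (y s) i - fst (y t) i) < eps) /\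
  (forall (i : Fin.t m) t, 0 <= t -> forall eps, 0 < eps -> exists del, 0 < del /\
     forall s, 0 <= s -> Rabs (s - t) < del -> Rabs (snd (y s) i - snd (y t) i) < eps) /\
  (forall (i : Fin.t n) t, 0 < t ->
     derivable_pt_lim (fun s => fst (y s) i) t (fst (V t (y t)) i)) /\
  (forall (i : Fin.t m) t, 0 < t ->
     derivable_pt_lim (fun s => snd (y s) i) t (snd (V t (y t)) i)).

(* Main.v *)
Require Import Defs.
From Stdlib Require Import Reals Lra Psatz ClassicalEpsilon.
Open Scope R_scope.


Lemma fsum_ext k (f g : Fin.t k -> R) : (forall i, f i = g i) -> fsum k f = fsum k g.
Proof. induction k; simpl; intros H; [reflexivity|]. rewrite H; f_equal; apply IHk; intros; apply H. Qed.

Lemma fsum_add k (f g : Fin.t k -> R) : fsum k (fun i => f i + g i) = fsum k f + fsum k g.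
Proof. induction k; simpl; [lra|]. rewrite IHk. lra. Qed.

Lemma fsum_scal k c (f : Fin.t k -> R) : fsum k (fun i => c * f i) = c * fsum k f.
Proof. induction k; simpl; [lra|]. rewrite IHk. lra. Qed.

Lemma fsum_le k (f g : Fin.t k -> R) : (forall i, f i <= g i) -> fsum k f <= fsum k g.
Proof. induction k; simpl; intros H; [lra|]. specialize (IHk (fun i => f (Fin.FS i)) (fun i => g (Fin.FS i)) (fun i => H _)). specialize (H Fin.F1). lra. Qed.

Lemma fsum_const_le k (f : Fin.t k -> R) c : (forall i, f i <= c) -> fsum k f <= INR k * c.
Proof. induction k; intros H; cbn [fsum]; [simpl; lra|]. specialize (IHk (fun i => f (Fin.FS i)) (fun i => H _)). specialize (H Fin.F1). rewrite S_INR. lra. Qed.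

Lemma fsum_zero k : fsum k (fun _ => 0) = 0.
Proof. induction k; simpl; [auto|rewrite IHk; lra]. Qed.

Lemma fsum_nonneg k (f : Fin.t k -> R) : (forall i, 0 <= f i) -> 0 <= fsum k f.
Proof. intros H. rewrite <- (fsum_zero k). apply fsum_le; auto. Qed.

Lemma dot_nonneg {k} (u : vec k) : 0 <= dot u u.
Proof. unfold dot. apply fsum_nonneg. intros; nra. Qed.

Lemma norm_nonneg {k} (u : vec k) : 0 <= norm u.
Proof. apply sqrt_pos. Qed.

Lemma norm_sq {k} (u : vec k) : norm u ^ 2 = dot u u.
Proof. unfold norm. simpl. rewrite Rmult_1_r. apply sqrt_sqrt, dot_nonneg. Qed.

Lemma dot_comm {k} (u w : vec k) : dot u w = dot w u.
Proof. unfold dot; apply fsum_ext; intros; ring. Qed.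

Lemma dot_add_r {k} (u w1 w2 : vec k) : dot u (vadd w1 w2) = dot u w1 + dot u w2.
Proof. unfold dot, vadd. rewrite <- fsum_add. apply fsum_ext; intros; ring. Qed.

Lemma quad_disc A B C : 0 <= C -> (forall l, 0 <= A - 2*l*B + l*l*C) -> B*B <= A*C.
Proof.
  intros HC0 H. destruct (Req_dec C 0) as [HC|HC].
  - subst C. destruct (Req_dec B 0). subst; specialize (H 0); nra.
    specialize (H ((A+1)/(2*B))). assert (2*((A+1)/(2*B))*B = A+1) by (field; auto). nra.
  - assert (0 < C) by lra.
    specialize (H (B/C)). replace (A - 2*(B/C)*B + B/C*(B/C)*C) with ((A*C - B*B)/C) in H by (field; lra).
    apply Rmult_le_compat_r with (r:=C) in H; [|lra]. unfold Rdiv in H. rewrite Rmult_assoc, Rinv_l in H; lra.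
Qed.

Lemma CS_sq {k} (u w : vec k) : dot u w * dot u w <= dot u u * dot w w.
Proof.
  apply quad_disc. apply dot_nonneg. intros l.
  assert (E : dot u u - 2*l*dot u w + l*l*dot w w = dot (vsub u (vscal l w)) (vsub u (vscal l w))).
  { transitivity (fsum k (fun i => u i*u i + ((-(2*l)) * (u i * w i) + (l*l)*(w i * w i)))).
    - rewrite !fsum_add, !fsum_scal. unfold dot. ring.
    - unfold dot, vsub, vscal. apply fsum_ext; intros; ring. }
  rewrite E. apply dot_nonneg.
Qed.

Lemma CS {k} (u w : vec k) : Rabs (dot u w) <= norm u * norm w.
Proof.
  unfold norm. rewrite <- sqrt_mult by apply dot_nonneg.
  rewrite <- sqrt_Rsqr_abs. apply sqrt_le_1_alt. unfold Rsqr. apply CS_sq.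
Qed.


Lemma dot_ext {k} (u u' w w' : vec k) : (forall i, u i = u' i) -> (forall i, w i = w' i) -> dot u w = dot u' w'.
Proof. intros H1 H2; unfold dot; apply fsum_ext; intros; rewrite H1, H2; auto. Qed.

Lemma norm_ext {k} (u w : vec k) : (forall i, u i = w i) -> norm u = norm w.
Proof. intros H; unfold norm; f_equal; apply dot_ext; auto. Qed.

Lemma norm_scal {k} c (u : vec k) : norm (vscal c u) = Rabs c * norm u.
Proof.
  unfold norm. replace (dot (vscal c u) (vscal c u)) with (c*c * dot u u).
  rewrite sqrt_mult by (nra || apply dot_nonneg). f_equal. rewrite <- sqrt_Rsqr_abs. auto.
  unfold dot, vscal. rewrite <- fsum_scal. apply fsum_ext; intros; ring.
Qed.

Lemma norm_triangle {k} (u w : vec k) : norm (vadd u w) <= norm u + norm w.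
Proof.
  pose proof (CS u w). pose proof (norm_nonneg u). pose proof (norm_nonneg w).
  apply Rsqr_incr_0_var; [|lra]. unfold Rsqr.
  assert (E: norm (vadd u w) * norm (vadd u w) = dot u u + 2 * dot u w + dot w w).
  { replace (norm (vadd u w) * norm (vadd u w)) with (norm (vadd u w) ^2) by ring. rewrite norm_sq. unfold dot, vadd.
    rewrite <- fsum_scal, <- !fsum_add. apply fsum_ext; intros; ring. }
  rewrite E. rewrite <- (norm_sq u), <- (norm_sq w). simpl. pose proof (Rle_abs (dot u w)). nra.
Qed.

Definition frob {p q} (A : mat p q) : R := fsum p (fun i => dot (A i) (A i)).

Lemma mvmul_dot {p q} (A : mat p q) v i : mvmul A v i = dot (A i) v.
Proof. reflexivity. Qed.

Lemma mvmul_frob {p q} (A : mat p q) v : dot (mvmul A v) (mvmul A v) <= frob A * dot v v.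
Proof.
  unfold frob. rewrite (Rmult_comm (fsum _ _)), <- fsum_scal. unfold dot at 1. apply fsum_le. intros i.
  rewrite mvmul_dot. rewrite (Rmult_comm (dot v v)). apply CS_sq.
Qed.

Lemma frob_nonneg {p q} (A : mat p q) : 0 <= frob A.
Proof. apply fsum_nonneg; intros; apply dot_nonneg. Qed.

Lemma norm_mvmul_frob {p q} (A : mat p q) v : norm (mvmul A v) <= sqrt (frob A) * norm v.
Proof. unfold norm. rewrite <- sqrt_mult by (apply frob_nonneg || apply dot_nonneg). apply sqrt_le_1_alt, mvmul_frob. Qed.

Definition opS {p q} (A : mat p q) := (fun r => exists v : vec q, norm v <= 1 /\ r = norm (mvmul A v)).

Lemma norm_zero {k} : norm (@vzero k) = 0.
Proof. unfold norm. replace (dot (@vzero k) vzero) with 0. apply sqrt_0. unfold dot, vzero. transitivity (fsum k (fun _ => 0)). symmetry; apply fsum_zero. apply fsum_ext; intros; ring. Qed.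

Lemma opnorm_lub {p q} (A : mat p q) : is_lub (opS A) (opnorm A).
Proof.
  unfold opnorm. apply epsilon_spec.
  destruct (completeness (opS A)) as [c Hc].
  - exists (sqrt (frob A)). intros r [v [Hv ->]]. pose proof (norm_mvmul_frob A v). pose proof (sqrt_pos (frob A)). nra.
  - exists (norm (mvmul A vzero)). exists vzero. rewrite norm_zero. split; [lra|auto].
  - exists c; auto.
Qed.

Lemma opnorm_nonneg {p q} (A : mat p q) : 0 <= opnorm A.
Proof. destruct (opnorm_lub A) as [H _]. eapply Rle_trans; [apply (norm_nonneg (mvmul A vzero))|]. apply H. exists vzero. rewrite norm_zero. split; [lra|reflexivity]. Qed.

Lemma mvmul_scal {p q} (A : mat p q) c v i : mvmul A (vscal c v) i = c * mvmul A v i.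
Proof. unfold mvmul, vscal. rewrite <- fsum_scal. apply fsum_ext; intros; ring. Qed.

Lemma opnorm_bound {p q} (A : mat p q) v : norm (mvmul A v) <= opnorm A * norm v.
Proof.
  destruct (opnorm_lub A) as [H _].
  assert (K: forall l, 0 < l -> l * norm v <= 1 -> l * norm (mvmul A v) <= opnorm A).
  { intros l Hl Hn. apply H. exists (vscal l v). rewrite norm_scal, Rabs_pos_eq by lra. split; auto.
    rewrite (norm_ext (mvmul A (vscal l v)) (vscal l (mvmul A v))) by (intros; apply mvmul_scal). rewrite norm_scal, Rabs_pos_eq; lra. }
  pose proof (norm_nonneg v). pose proof (norm_nonneg (mvmul A v)). pose proof (opnorm_nonneg A).
  destruct (Req_dec (norm v) 0) as [Hz|Hz].
  - rewrite Hz, Rmult_0_r. destruct (Req_dec (norm (mvmul A v)) 0); [lra|].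
    specialize (K ((opnorm A + 1) / norm (mvmul A v))).
    assert (0 < (opnorm A + 1) / norm (mvmul A v)) by (apply Rdiv_lt_0_compat; lra).
    rewrite Hz in K. specialize (K ltac:(assumption) ltac:(lra)). unfold Rdiv in K. rewrite Rmult_assoc, Rinv_l in K; lra.
  - specialize (K (/ norm v) ltac:(apply Rinv_0_lt_compat; lra) ltac:(rewrite Rinv_l; lra)).
    apply Rmult_le_compat_r with (r := norm v) in K; [|lra].
    rewrite Rmult_comm, <- Rmult_assoc, Rinv_r, Rmult_1_l in K; lra.
Qed.

Lemma opnorm_le_frob {p q} (A : mat p q) : opnorm A <= sqrt (frob A).
Proof.
  destruct (opnorm_lub A) as [_ H]. apply H. intros r [v [Hv ->]].
  pose proof (norm_mvmul_frob A v). pose proof (sqrt_pos (frob A)). nra.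
Qed.

Definition msub {p q} (A B : mat p q) : mat p q := fun i j => A i j - B i j.

Lemma opnorm_tri {p q} (A B : mat p q) : opnorm A <= opnorm B + opnorm (msub A B).
Proof.
  destruct (opnorm_lub A) as [_ H]. apply H. intros r [v [Hv ->]].
  replace (norm (mvmul A v)) with (norm (vadd (mvmul B v) (mvmul (msub A B) v))).
  - eapply Rle_trans; [apply norm_triangle|].
    pose proof (opnorm_bound B v). pose proof (opnorm_bound (msub A B) v).
    pose proof (opnorm_nonneg B). pose proof (opnorm_nonneg (msub A B)). pose proof (norm_nonneg v). nra.
  - apply norm_ext. intros i. unfold vadd, mvmul, msub. rewrite <- fsum_add. apply fsum_ext; intros; ring.
Qed.

Lemma opnorm_diff {p q} (A B : mat p q) : Rabs (opnorm A - opnorm B) <= sqrt (frob (msub A B)).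
Proof.
  pose proof (opnorm_tri A B). pose proof (opnorm_tri B A).
  pose proof (opnorm_le_frob (msub A B)). pose proof (opnorm_le_frob (msub B A)).
  replace (frob (msub B A)) with (frob (msub A B)) in *.
  - apply Rabs_le; lra.
  - unfold frob, dot, msub. apply fsum_ext; intros; apply fsum_ext; intros; ring.
Qed.


Definition RCf (c : R -> R) s0 := forall eps, 0 < eps -> exists del, 0 < del /\
  forall s, 0 <= s -> Rabs (s - s0) < del -> Rabs (c s - c s0) < eps.

Lemma RCf_lim c s0 : RCf c s0 <-> limit1_in c (fun s => 0 <= s) (c s0) s0.
Proof.
  unfold RCf, limit1_in, limit_in; simpl; unfold R_dist; split; intros H eps Heps;
  destruct (H eps Heps) as [d [Hd H']]; exists d; split; auto; intros; apply H'; tauto.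
Qed.

Lemma RCf_plus c d s0 : RCf c s0 -> RCf d s0 -> RCf (fun s => c s + d s) s0.
Proof. rewrite !RCf_lim; intros; apply limit_plus; auto. Qed.
Lemma RCf_minus c d s0 : RCf c s0 -> RCf d s0 -> RCf (fun s => c s - d s) s0.
Proof. rewrite !RCf_lim; intros; apply limit_minus; auto. Qed.
Lemma RCf_mult c d s0 : RCf c s0 -> RCf d s0 -> RCf (fun s => c s * d s) s0.
Proof. rewrite !RCf_lim; intros; apply limit_mul; auto. Qed.
Lemma RCf_const k s0 : RCf (fun _ => k) s0.
Proof. intros e He; exists 1; split; [lra|]; intros; rewrite Rminus_diag, Rabs_R0; lra. Qed.

Lemma fin_min k (P : Fin.t k -> R -> Prop) :
  (forall i d d', 0 < d' <= d -> P i d -> P i d') ->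
  (forall i, exists d, 0 < d /\ P i d) -> exists d, 0 < d /\ forall i, P i d.
Proof.
  induction k; intros Hm H.
  - exists 1; split; [lra|]. intros i; inversion i.
  - destruct (IHk (fun i => P (Fin.FS i))) as [d1 [Hd1 H1]]; [intros; eapply Hm; eauto|intros; apply H|].
    destruct (H Fin.F1) as [d0 [Hd0 H0]].
    exists (Rmin d0 d1); split; [apply Rmin_pos; auto|].
    intros i; pattern i; apply Fin.caseS'.
    + eapply Hm; [|apply H0]. split; [apply Rmin_pos; auto| apply Rmin_l].
    + intros i'; eapply Hm; [|apply H1]. split; [apply Rmin_pos; auto| apply Rmin_r].
Qed.

Lemma fsum_sq_small {k} (u : vec k) eta : 0 <= eta -> (forall i, Rabs (u i) < eta) -> dot u u <= INR k * (eta * eta).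
Proof.
  intros He H. unfold dot. apply fsum_const_le. intros i. specialize (H i).
  pose proof (Rabs_pos (u i)).
  assert (u i * u i = Rabs (u i) * Rabs (u i)) by (rewrite <- Rabs_mult; symmetry; apply Rabs_pos_eq; nra). nra.
Qed.

Lemma sqrt_lt_eps x e : 0 < e -> x < e * e -> sqrt x < e.
Proof.
  intros He Hx. destruct (Rle_lt_dec x 0).
  - rewrite sqrt_neg_0 by lra; auto.
  - rewrite <- (sqrt_square e) by lra. apply sqrt_lt_1_alt; lra.
Qed.

Definition RCp {n m} (p : R -> pt n m) s0 := forall eps, 0 < eps -> exists del, 0 < del /\
  forall s, 0 <= s -> Rabs (s - s0) < del -> ptnorm (ptsub (p s) (p s0)) < eps.

Lemma RCp_of_comp {n m} (p : R -> pt n m) s0 :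
  (forall i, RCf (fun s => fst (p s) i) s0) -> (forall i, RCf (fun s => snd (p s) i) s0) -> RCp p s0.
Proof.
  intros H1 H2 eps Heps.
  set (eta := eps / (INR n + INR m + 1)).
  pose proof (pos_INR n). pose proof (pos_INR m).
  assert (Heta : 0 < eta) by (unfold eta; apply Rdiv_lt_0_compat; lra).
  destruct (fin_min n (fun i d => forall s, 0 <= s -> Rabs (s - s0) < d -> Rabs (fst (p s) i - fst (p s0) i) < eta)) as [d1 [Hd1 K1]].
  { intros i d d' Hd HP s Hs Hsd; apply HP; auto; lra. }
  { intros i; apply H1; auto. }
  destruct (fin_min m (fun i d => forall s, 0 <= s -> Rabs (s - s0) < d -> Rabs (snd (p s) i - snd (p s0) i) < eta)) as [d2 [Hd2 K2]].
  { intros i d d' Hd HP s Hs Hsd; apply HP; auto; lra. }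
  { intros i; apply H2; auto. }
  exists (Rmin d1 d2); split; [apply Rmin_pos; auto|]. intros s Hs Hsd.
  pose proof (Rmin_l d1 d2). pose proof (Rmin_r d1 d2).
  unfold ptnorm, ptsub; simpl.
  pose proof (fsum_sq_small (vsub (fst (p s)) (fst (p s0))) eta ltac:(lra) ltac:(intros i; apply K1; auto; lra)).
  pose proof (fsum_sq_small (vsub (snd (p s)) (snd (p s0))) eta ltac:(lra) ltac:(intros i; apply K2; auto; lra)).
  apply sqrt_lt_eps; auto.
  assert (E: eps = eta * (INR n + INR m + 1)) by (unfold eta; field; lra).
  clearbody eta. subst eps.
  assert ((INR n + INR m) * (eta*eta) < (eta * (INR n + INR m + 1)) * (eta * (INR n + INR m + 1))).
  { assert (0 < eta*eta) by nra. set (N := INR n + INR m) in *. assert (0 <= N) by (unfold N; lra). nra. }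
  nra.
Qed.

Lemma RCf_comp_U {n m} (U : pt n m -> Prop) (phi : pt n m -> R) (p : R -> pt n m) s0 :
  cont_on U phi -> (forall s, 0 <= s -> U (p s)) -> 0 <= s0 -> RCp p s0 -> RCf (fun s => phi (p s)) s0.
Proof.
  intros Hc HU Hs0 Hp eps Heps.
  destruct (Hc (p s0) (HU s0 Hs0) eps Heps) as [d [Hd H]].
  destruct (Hp d Hd) as [d' [Hd' H']].
  exists d'; split; [auto|]. intros s Hs Hsd. apply H; auto. Qed.

Lemma frob_small {p q} (A : mat p q) eta : 0 <= eta -> (forall i j, Rabs (A i j) < eta) ->
  frob A <= INR p * (INR q * (eta*eta)).
Proof.
  intros He H. unfold frob. apply fsum_const_le. intros i. apply fsum_sq_small; auto.
Qed.

Lemma RCf_opnorm {n m p q} (U : pt n m -> Prop) (M : pt n m -> mat p q) (pp : R -> pt n m) s0 :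
  (forall i j, cont_on U (fun x => M x i j)) -> (forall s, 0 <= s -> U (pp s)) -> 0 <= s0 -> RCp pp s0 ->
  RCf (fun s => opnorm (M (pp s))) s0.
Proof.
  intros Hc HU Hs0 Hp eps Heps.
  set (eta := eps / (INR p * INR q + 1)).
  pose proof (pos_INR p). pose proof (pos_INR q).
  assert (Heta : 0 < eta) by (unfold eta; apply Rdiv_lt_0_compat; nra).
  destruct (fin_min p (fun i d => forall j, forall s, 0 <= s -> Rabs (s - s0) < d -> Rabs (M (pp s) i j - M (pp s0) i j) < eta)) as [d [Hd K]].
  { intros i d d' Hd HP j s Hs Hsd; apply HP; auto; lra. }
  { intros i. apply (fin_min q (fun j d => forall s, 0 <= s -> Rabs (s - s0) < d -> Rabs (M (pp s) i j - M (pp s0) i j) < eta)).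
    - intros j d d' Hd HP s Hs Hsd; apply HP; auto; lra.
    - intros j. apply (RCf_comp_U U (fun x => M x i j) pp s0); auto. }
  exists d; split; auto. intros s Hs Hsd.
  eapply Rle_lt_trans; [apply opnorm_diff|].
  apply sqrt_lt_eps; auto.
  eapply Rle_lt_trans; [apply frob_small with (eta := eta); [lra|]|].
  - intros i j. unfold msub. apply K; auto.
  - assert (E: eps = eta * (INR p * INR q + 1)) by (unfold eta; field; nra).
    clearbody eta. subst eps. rewrite <- Rmult_assoc. assert (0 < eta*eta) by nra. set (N := INR p * INR q) in *. assert (0 <= N) by (unfold N; nra). nra.
Qed.


Lemma Rmax_lip x y : Rabs (Rmax 0 y - Rmax 0 x) <= Rabs (y - x).
Proof. unfold Rmax; repeat destruct Rle_dec; unfold Rabs; repeat destruct Rcase_abs; lra. Qed.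

Lemma ce_cont (c : R -> R) : (forall s0, 0 <= s0 -> RCf c s0) -> forall x, continuity_pt (fun s => c (Rmax 0 s)) x.
Proof.
  intros Hc x. unfold continuity_pt, continue_in, limit1_in, limit_in; simpl; unfold R_dist.
  intros eps Heps.
  assert (H0 : 0 <= Rmax 0 x) by apply Rmax_l.
  destruct (Hc _ H0 eps Heps) as [d [Hd H]].
  exists d; split; auto. intros y [_ Hy]. apply H. apply Rmax_l.
  eapply Rle_lt_trans; [apply Rmax_lip|]. auto.
Qed.

Lemma RC_integrable (c : R -> R) T : 0 <= T -> (forall s0, 0 <= s0 -> RCf c s0) -> Riemann_integrable c 0 T.
Proof.
  intros HT Hc.
  apply Riemann_integrable_ext with (f := fun s => c (Rmax 0 s)).
  - intros x Hx. rewrite Rmin_left in Hx by lra. rewrite Rmax_right by lra. auto.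
  - apply continuity_implies_RiemannInt; auto. intros; apply ce_cont; auto.
Qed.

Lemma cont_RCf f x : continuity_pt f x -> RCf f x.
Proof.
  unfold continuity_pt, continue_in, limit1_in, limit_in, D_x, no_cond; simpl; unfold R_dist.
  intros H eps Heps. destruct (H eps Heps) as [d [Hd K]]. exists d; split; auto.
  intros s Hs Hsd. destruct (Req_dec x s). subst; rewrite Rminus_diag, Rabs_R0; auto. apply K; auto.
Qed.

Ltac nl := match goal with H: ~ _ |- _ => exfalso; apply H; lra end.

Lemma gronwall (c h dh : R -> R) (k T : R) :
  0 <= T ->
  (forall s0, 0 <= s0 -> RCf c s0) ->
  RCf h 0 ->
  (forall s, 0 < s -> derivable_pt_lim h s (dh s)) ->
  (forall s, 0 < s -> dh s >= k * c s * h s) ->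
  forall pr : Riemann_integrable c 0 T, h T >= h 0 * exp (k * RiemannInt pr).
Proof.
  intros HT Hc Hh Hd Hdi pr.
  destruct (Req_dec T 0) as [HT0|HT0].
  { subst T. rewrite RiemannInt_P9, Rmult_0_r, exp_0. lra. }
  assert (Cce : forall x, 0 <= x <= T -> continuity_pt (fun s => c (Rmax 0 s)) x) by (intros; apply ce_cont; auto).
  set (P := primitive HT (FTC_P1 HT Cce)).
  assert (dP : forall x, 0 <= x <= T -> derivable_pt_lim P x (c (Rmax 0 x))).
  { intros x Hx. apply (@RiemannInt_P28 (fun s => c (Rmax 0 s)) 0 T x HT Cce Hx). }
  set (E := fun s => exp (- (k * P s))).
  set (M := fun s => h s * E s).
  assert (dE : forall x, 0 <= x <= T -> derivable_pt_lim E x (exp (-(k * P x)) * (-(k * c (Rmax 0 x))))).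
  { intros x Hx. apply (derivable_pt_lim_comp (fun s => -(k * P s)) exp x).
    - apply (derivable_pt_lim_opp (fun s => k * P s)). apply (derivable_pt_lim_scal P k). auto.
    - apply derivable_pt_lim_exp. }
  assert (dM : forall x, 0 < x <= T -> derivable_pt_lim M x (dh x * E x + h x * (exp (-(k * P x)) * (-(k * c (Rmax 0 x)))))).
  { intros x Hx. apply (derivable_pt_lim_mult h E). apply Hd; lra. apply dE; lra. }
  assert (Mmono : forall e, 0 < e < T -> M T >= M e).
  { intros e He.
    destruct (MVT_cor2 M (fun x => dh x * E x + h x * (exp (-(k * P x)) * (-(k * c (Rmax 0 x))))) e T) as [xi [Hxi1 Hxi2]].
    - lra.
    - intros; apply dM; lra.
    - rewrite Rmax_right in Hxi1 by lra. unfold E in Hxi1.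
      pose proof (exp_pos (-(k * P xi))). specialize (Hdi xi ltac:(lra)).
      assert (0 <= dh xi * exp (- (k * P xi)) + h xi * (exp (- (k * P xi)) * - (k * c xi))) by nra.
      nra. }
  assert (HM : RCf M 0).
  { apply RCf_mult; auto. apply cont_RCf. apply derivable_continuous_pt. exists (exp (-(k * P 0)) * (-(k * c (Rmax 0 0)))). apply dE; lra. }
  assert (P0 : P 0 = 0).
  { unfold P, primitive. destruct (Rle_dec 0 0); [|nl]. destruct (Rle_dec 0 T); [|nl]. apply RiemannInt_P9. }
  assert (PT : P T = RiemannInt pr).
  { unfold P, primitive. destruct (Rle_dec 0 T); [|nl]. destruct (Rle_dec T T); [|nl].
    symmetry. apply RiemannInt_P18; auto. intros x Hx. rewrite Rmax_right by lra. auto. }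
  assert (MT : M T >= M 0).
  { destruct (Rge_dec (M T) (M 0)) as [G|G]; auto. exfalso.
    destruct (HM (M 0 - M T) ltac:(lra)) as [d [Hd0 K]].
    set (e := Rmin (d/2) (T/2)).
    assert (0 < e) by (apply Rmin_pos; lra).
    assert (e <= d/2) by apply Rmin_l. assert (e <= T/2) by apply Rmin_r.
    specialize (K e ltac:(lra) ltac:(rewrite Rminus_0_r, Rabs_pos_eq; lra)).
    specialize (Mmono e ltac:(lra)). apply Rabs_def2 in K. lra. }
  unfold M, E in MT. rewrite P0, PT in MT. rewrite Rmult_0_r, Ropp_0, exp_0, Rmult_1_r in MT.
  apply Rle_ge. apply Rge_le in MT.
  replace (h T) with (h T * exp (- (k * RiemannInt pr)) * exp (k * RiemannInt pr)).
  - apply Rmult_le_compat_r; auto. left; apply exp_pos.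
  - rewrite Rmult_assoc, <- exp_plus. replace (- (k * RiemannInt pr) + k * RiemannInt pr) with 0 by ring. rewrite exp_0; ring.
Qed.


Lemma dpl_eq f x l l' : derivable_pt_lim f x l -> l = l' -> derivable_pt_lim f x l'.
Proof. intros H ->; auto. Qed.

Lemma D_dot {k} (u : R -> vec k) (du : vec k) s :
  (forall i, derivable_pt_lim (fun r => u r i) s (du i)) ->
  derivable_pt_lim (fun r => dot (u r) (u r)) s (2 * dot (u s) du).
Proof.
  revert u du. induction k; intros u du H.
  - unfold dot; simpl. apply dpl_eq with 0; [apply derivable_pt_lim_const|ring].
  - eapply dpl_eq.
    + apply (derivable_pt_lim_plus (fun r => u r Fin.F1 * u r Fin.F1) (fun r => dot (fun i => u r (Fin.FS i)) (fun i => u r (Fin.FS i)))).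
      * apply (derivable_pt_lim_mult (fun r => u r Fin.F1) (fun r => u r Fin.F1)); apply H.
      * apply (IHk (fun r i => u r (Fin.FS i)) (fun i => du (Fin.FS i))). intros; apply H.
    + unfold dot; simpl. ring.
Qed.

Lemma RCf_dot {k} (u : R -> vec k) s0 :
  (forall i, RCf (fun r => u r i) s0) -> RCf (fun r => dot (u r) (u r)) s0.
Proof.
  revert u. induction k; intros u H.
  - unfold dot; simpl. apply RCf_const.
  - apply (RCf_plus (fun r => u r Fin.F1 * u r Fin.F1) (fun r => dot (fun i => u r (Fin.FS i)) (fun i => u r (Fin.FS i)))).
    + apply RCf_mult; apply H.
    + apply (IHk (fun r i => u r (Fin.FS i))). intros; apply H.
Qed.

Lemma dot_neg_zero {k} (u : vec k) : dot (vsub vzero u) (vsub vzero u) = dot u u.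
Proof. unfold dot, vsub, vzero. apply fsum_ext; intros; ring. Qed.

Theorem lemma2p5 (n m : nat)
  (f : pt n m -> vec n) (g : pt n m -> vec m)
  (Daf : pt n m -> mat n n) (Dzf : pt n m -> mat n m)
  (Dag : pt n m -> mat m n) (Dzg : pt n m -> mat m m)
  (U Gamma : pt n m -> Prop) (alpha ell : pt n m -> R) (c1 : R)
  (Phi : R -> pt n m -> pt n m) (Q : R -> pt n m -> pt n m -> pt n m) :
  (* Hypothesis 1 *)
  X_open U -> X_convex U ->
  (exists d, 0 < d /\ forall x, U x -> forall x', Cone x x' -> U x' -> Ball d x x') ->
  (* Hypothesis 2 *)
  C1_on U f g Daf Dzf Dag Dzg ->
  cont_on U alpha -> cont_on U ell ->
  (forall x, U x -> 0 < alpha x) -> (forall x, U x -> 0 <= ell x) -> 0 < c1 ->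
  (forall x, U x -> forall a' : vec n, dot a' (mvmul (Daf x) a') >= alpha x * (norm a')^2) ->
  (forall x, U x -> forall z' : vec m, dot z' (mvmul (Dzg x) z') <= ell x * (norm z')^2) ->
  (forall x, U x -> alpha x >= ell x + opnorm (Dzf x) + opnorm (Dag x) + c1) ->
  (* Phi is the flow of x' = F(x) (for t >= 0, starting in Gamma) *)
  (forall x, Gamma x -> Phi 0 x = x /\ solves_pos (fun s => Phi s x) (fun _ p => Fld f g p)) ->
  (* Hypothesis 3 *)
  (forall x, Gamma x -> U x) ->
  (forall x, Gamma x -> forall t, 0 <= t -> Gamma (Phi t x)) ->
  (forall z : vec m, (exists a, Gamma (a, z)) <-> (exists a, U (a, z))) ->
  (* Q(t,x) is the fundamental matrix of x' = DF(Phi(t,x)) x, Q(0,x) = I,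
     represented by its action v |-> Q(t,x) v *)
  (forall x, Gamma x -> forall v : pt n m,
     Q 0 x v = v /\ solves_pos (fun s => Q s x v) (fun s w => DF Daf Dzf Dag Dzg (Phi s x) w)) ->
  (* Conclusion *)
  forall x, Gamma x -> forall v : pt n m, Cone ptzero v ->
  forall t, 0 <= t ->
    exists pr : Riemann_integrable (fun s => alpha (Phi s x) - opnorm (Dzf (Phi s x))) 0 t,
      norm (Pi (Q t x v)) >= norm (Pi v) * exp (RiemannInt pr).
Proof.
  intros _ _ _ HC1 Hca Hcl Hapos Hlpos Hc1 Hdaf Hdzg Hal Hflow HGU HGinv _ HQ x Gx v Hv t Ht.
  destruct HC1 as [_ [Cdaf [Cdzf [Cdag Cdzg]]]].
  assert (HpU : forall s, 0 <= s -> U (Phi s x)) by (intros; apply HGU, HGinv; auto).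
  destruct (Hflow x Gx) as [_ [Hp1 [Hp2 _]]].
  assert (Hpc : forall s0, 0 <= s0 -> RCp (fun s => Phi s x) s0).
  { intros s0 Hs0. apply RCp_of_comp; intros i eps Heps; [apply Hp1|apply Hp2]; auto. }
  assert (Hgam : forall s0, 0 <= s0 -> RCf (fun s => alpha (Phi s x) - opnorm (Dzf (Phi s x))) s0).
  { intros s0 Hs0. apply RCf_minus.
    - apply (RCf_comp_U U alpha (fun s => Phi s x)); auto.
    - apply (RCf_opnorm U Dzf (fun s => Phi s x)); auto. }
  assert (Hbet : forall s0, 0 <= s0 -> RCf (fun s => opnorm (Dzf (Phi s x)) + opnorm (Dag (Phi s x)) + 2 * ell (Phi s x)) s0).
  { intros s0 Hs0. apply RCf_plus; [apply RCf_plus|apply RCf_mult; [apply RCf_const|]].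
    - apply (RCf_opnorm U Dzf (fun s => Phi s x)); auto.
    - apply (RCf_opnorm U Dag (fun s => Phi s x)); auto.
    - apply (RCf_comp_U U ell (fun s => Phi s x)); auto. }
  exists (RC_integrable _ t Ht Hgam).
  destruct (HQ x Gx v) as [HQ0 [Hq1 [Hq2 [Hq3 Hq4]]]].
  set (A := fun s => dot (fst (Q s x v)) (fst (Q s x v))).
  set (Z := fun s => dot (snd (Q s x v)) (snd (Q s x v))).
  assert (dA : forall s, 0 < s -> derivable_pt_lim A s
     (2 * dot (fst (Q s x v)) (vadd (mvmul (Daf (Phi s x)) (fst (Q s x v))) (mvmul (Dzf (Phi s x)) (snd (Q s x v)))))).
  { intros s Hs. apply (D_dot (fun r => fst (Q r x v))). intros i. apply Hq3; auto. }
  assert (dZ : forall s, 0 < s -> derivable_pt_lim Z s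
     (2 * dot (snd (Q s x v)) (vadd (mvmul (Dag (Phi s x)) (fst (Q s x v))) (mvmul (Dzg (Phi s x)) (snd (Q s x v)))))).
  { intros s Hs. apply (D_dot (fun r => snd (Q r x v))). intros i. apply Hq4; auto. }
  assert (RA : RCf A 0) by (apply (RCf_dot (fun r => fst (Q r x v))); intros i eps Heps; apply Hq1; auto; lra).
  assert (RZ : RCf Z 0) by (apply (RCf_dot (fun r => snd (Q r x v))); intros i eps Heps; apply Hq2; auto; lra).
  assert (EST : forall s, 0 < s ->
    let a := fst (Q s x v) in let z := snd (Q s x v) in
    dot a (vadd (mvmul (Daf (Phi s x)) a) (mvmul (Dzf (Phi s x)) z)) >=
      alpha (Phi s x) * norm a ^ 2 - opnorm (Dzf (Phi s x)) * norm a * norm z /\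
    dot z (vadd (mvmul (Dag (Phi s x)) a) (mvmul (Dzg (Phi s x)) z)) <=
      opnorm (Dag (Phi s x)) * norm a * norm z + ell (Phi s x) * norm z ^ 2).
  { intros s Hs a z. rewrite !dot_add_r.
    assert (HU : U (Phi s x)) by (apply HpU; lra).
    pose proof (Hdaf _ HU a). pose proof (Hdzg _ HU z).
    pose proof (CS a (mvmul (Dzf (Phi s x)) z)). pose proof (CS z (mvmul (Dag (Phi s x)) a)).
    pose proof (opnorm_bound (Dzf (Phi s x)) z). pose proof (opnorm_bound (Dag (Phi s x)) a).
    pose proof (norm_nonneg a). pose proof (norm_nonneg z).
    pose proof (Rle_abs (dot a (mvmul (Dzf (Phi s x)) z))).
    pose proof (Rle_abs (- dot a (mvmul (Dzf (Phi s x)) z))). rewrite Rabs_Ropp in *.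
    pose proof (Rle_abs (dot z (mvmul (Dag (Phi s x)) a))).
    split; nra. }
  assert (CONE : forall s, 0 <= s -> Z s <= A s).
  { intros s Hs.
    pose proof (gronwall _ (fun r => A r - Z r)
      (fun r => 2 * dot (fst (Q r x v)) (vadd (mvmul (Daf (Phi r x)) (fst (Q r x v))) (mvmul (Dzf (Phi r x)) (snd (Q r x v))))
              - 2 * dot (snd (Q r x v)) (vadd (mvmul (Dag (Phi r x)) (fst (Q r x v))) (mvmul (Dzg (Phi r x)) (snd (Q r x v)))))
      1 s Hs Hbet (RCf_minus _ _ _ RA RZ)) as G.
    assert (L0 : A 0 - Z 0 >= 0).
    { unfold A, Z. rewrite HQ0. unfold Cone, Lf, ptzero in Hv. cbn [fst snd] in Hv. rewrite !norm_sq, !dot_neg_zero in Hv. lra. }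

    specialize (G ltac:(intros; apply derivable_pt_lim_minus; auto)).
    assert (DI : forall r, 0 < r ->
      2 * dot (fst (Q r x v)) (vadd (mvmul (Daf (Phi r x)) (fst (Q r x v))) (mvmul (Dzf (Phi r x)) (snd (Q r x v))))
              - 2 * dot (snd (Q r x v)) (vadd (mvmul (Dag (Phi r x)) (fst (Q r x v))) (mvmul (Dzg (Phi r x)) (snd (Q r x v))))
      >= 1 * (opnorm (Dzf (Phi r x)) + opnorm (Dag (Phi r x)) + 2 * ell (Phi r x)) * (A r - Z r)).
    { intros r Hr; destruct (EST r Hr) as [E1 E2].
      assert (HU : U (Phi r x)) by (apply HpU; lra).
      pose proof (Hal _ HU); pose proof (Hlpos _ HU).
      pose proof (opnorm_nonneg (Dzf (Phi r x))); pose proof (opnorm_nonneg (Dag (Phi r x))).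
      unfold A, Z; rewrite <- !norm_sq.
      pose proof (norm_nonneg (fst (Q r x v))); pose proof (norm_nonneg (snd (Q r x v))).
      set (na := norm (fst (Q r x v))) in *; set (nz := norm (snd (Q r x v))) in *.
      set (K1 := opnorm (Dzf (Phi r x))) in *. set (K2 := opnorm (Dag (Phi r x))) in *.
      set (al := alpha (Phi r x)) in *. set (l := ell (Phi r x)) in *.
      set (d1 := dot _ (vadd (mvmul (Daf _) _) _)) in *. set (d2 := dot _ (vadd (mvmul (Dag _) _) _)) in *.
      assert (0 <= (K1+K2) * ((na - nz) * (na - nz))) by (apply Rmult_le_pos; [lra| apply Rle_0_sqr]).
      assert (0 <= (al - l - K1 - K2 - c1) * (na * na)) by (apply Rmult_le_pos; [lra| apply Rle_0_sqr]).
      assert (0 <= c1 * (na*na)) by (apply Rmult_le_pos; [lra| apply Rle_0_sqr]).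
      simpl. nra. }
    specialize (G DI).
    specialize (G (RC_integrable _ s Hs Hbet)).
    pose proof (exp_pos (1 * RiemannInt (RC_integrable _ s Hs Hbet))).
    assert (0 <= (A 0 - Z 0) * exp (1 * RiemannInt (RC_integrable _ s Hs Hbet))) by (apply Rmult_le_pos; lra).
    lra. }
  pose proof (gronwall _ A
      (fun r => 2 * dot (fst (Q r x v)) (vadd (mvmul (Daf (Phi r x)) (fst (Q r x v))) (mvmul (Dzf (Phi r x)) (snd (Q r x v)))))
      2 t Ht Hgam RA dA) as G.
  assert (DI : forall r, 0 < r ->
     2 * dot (fst (Q r x v)) (vadd (mvmul (Daf (Phi r x)) (fst (Q r x v))) (mvmul (Dzf (Phi r x)) (snd (Q r x v))))
     >= 2 * (alpha (Phi r x) - opnorm (Dzf (Phi r x))) * A r).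
  { intros r Hr; destruct (EST r Hr) as [E1 E2].
    pose proof (CONE r ltac:(lra)) as Cr.
    pose proof (opnorm_nonneg (Dzf (Phi r x))).
    unfold A, Z in *; rewrite <- !norm_sq in *.
    pose proof (norm_nonneg (fst (Q r x v))); pose proof (norm_nonneg (snd (Q r x v))).
    set (na := norm (fst (Q r x v))) in *; set (nz := norm (snd (Q r x v))) in *.
    set (K1 := opnorm (Dzf (Phi r x))) in *. set (al := alpha (Phi r x)) in *.
    set (d1 := dot _ (vadd (mvmul (Daf _) _) _)) in *.
    assert (nz <= na) by (simpl in Cr; nra).
    assert (K1 * (na * nz) <= K1 * (na * na)) by (apply Rmult_le_compat_l; [lra|apply Rmult_le_compat_l; lra]).
    simpl. nra. }
  specialize (G DI).
  specialize (G (RC_integrable _ t Ht Hgam)).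
  set (I := RiemannInt (RC_integrable _ t Ht Hgam)) in *.
  unfold A in G. rewrite HQ0 in G. rewrite <- !norm_sq in G.
  unfold Pi.
  replace (exp (2 * I)) with (exp I * exp I) in G by (rewrite <- exp_plus; f_equal; ring).
  pose proof (exp_pos I). pose proof (norm_nonneg (fst (Q t x v))). pose proof (norm_nonneg (fst v)).
  nra.
Qed.
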